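(* Let $R$ and $S$ be finite connected racks, and let $T$ be a finite rack containing an element $t$ with $t\rhd t=t$ (for example, a non-empty quandle). If there exists an isomorphism of racks $R\times T\cong S\times T$, then $R\cong S$.
   Context: A rack is a set $R$ with a binary operation $\rhd$ such that every left multiplication $\ell_a\colon b\mapsto a\rhd b$ is a bijection and $a\rhd(b\rhd c)=(a\rhd b)\rhd(a\rhd c)$ for all $a,b,c$. A quandle is a rack with $a\rhd a=a$ for all $a$. The product $R\times T$ of racks is the cartesian product with componentwise operation. The inner automorphism group $\mathrm{Inn}(R)$ is the subgroup of the symmetric group on $R$ generated by all $\ell_a$; a rack is connected if it is non-empty and $\mathrm{Inn}(R)$ acts transitively on $R$. *)

(* Defs.v *)
From mathcomp Require Import all_boot fingroup perm.
Set Implicit Arguments. Unset Strict Implicit. Unset Printing Implicit Defensive.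

Record finRack := FinRack {
  rcar :> finType;
  rop : rcar -> rcar -> rcar;
  rop_bij : forall a : rcar, bijective (rop a);
  rop_dist : forall a b c : rcar, rop a (rop b c) = rop (rop a b) (rop a c)
}.

Definition lmul (R : finRack) (a : R) : {perm R} :=
  perm (bij_inj (rop_bij a)).

Definition Inn (R : finRack) : {group {perm R}} :=
  <<[set lmul a | a : R]>>%G.

Definition connected_rack (R : finRack) : Prop :=
  (exists x : R, True) /\
  forall x y : R, exists2 g, g \in Inn R & g x = y.

Definition prod_op (R T : finRack) (x y : (R * T)%type) : (R * T)%type :=
  (rop x.1 y.1, rop x.2 y.2).

Lemma prod_op_bij (R T : finRack) (a : (R * T)%type) : bijective (prod_op a).
Proof.
case: (rop_bij a.1) => f1 c1 c1'; case: (rop_bij a.2) => f2 c2 c2'.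
exists (fun y => (f1 y.1, f2 y.2)).
- by case=> x1 x2; rewrite /prod_op /= c1 c2.
- by case=> y1 y2; rewrite /prod_op /= c1' c2'.
Qed.

Lemma prod_op_dist (R T : finRack) (a b c : (R * T)%type) :
  prod_op a (prod_op b c) = prod_op (prod_op a b) (prod_op a c).
Proof. by rewrite /prod_op /= (rop_dist a.1) (rop_dist a.2). Qed.

Definition prod_rack (R T : finRack) : finRack :=
  @FinRack (R * T)%type (@prod_op R T) (@prod_op_bij R T) (@prod_op_dist R T).

Definition rack_iso (R S : finRack) (f : R -> S) : Prop :=
  bijective f /\ forall a b : R, f (rop a b) = rop (f a) (f b).

Definition rack_isomorphic (R S : finRack) : Prop :=
  exists f : R -> S, rack_iso f.

(* Main.v *)
Require Import Defs.
From mathcomp Require Import all_boot fingroup perm.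
Set Implicit Arguments. Unset Strict Implicit. Unset Printing Implicit Defensive.

Section Count.
Variable X : finRack.

Definition is_hom (A : finRack) (f : {ffun X -> A}) : bool :=
  [forall a, forall b, f (rop a b) == rop (f a) (f b)].
Definition kerf (A : finRack) (f : {ffun X -> A}) : {set (X * X)} :=
  [set p | f p.1 == f p.2].
Definition Sge (A : finRack) (K : {set (X * X)}) :=
  [set f : {ffun X -> A} | is_hom f && (K \subset kerf f)].
Definition Seq (A : finRack) (K : {set (X * X)}) :=
  [set f : {ffun X -> A} | is_hom f && (kerf f == K)].

Lemma Sge_sum (A : finRack) K :
  #|Sge A K| = \sum_(K' : {set (X * X)} | K \subset K') #|Seq A K'|.
Proof.
rewrite -sum1_card (partition_big (fun f => kerf f) (fun K' => K \subset K')).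
  apply: eq_bigr => K' HK'; rewrite -sum1_card; apply: eq_bigl => f.
  rewrite !inE; case: (kerf f =P K') => [->|_]; last by rewrite !andbF.
  by rewrite HK' !andbT.
by move=> f; rewrite inE => /andP[].
Qed.

Lemma Sge_le (A B : finRack) (phi : A -> B) K :
  injective phi -> (forall a b, phi (rop a b) = rop (phi a) (phi b)) ->
  #|Sge A K| <= #|Sge B K|.
Proof.
move=> inj hom.
pose F := fun f : {ffun X -> A} => [ffun x => phi (f x)].
have injF : injective F.
  move=> f g /ffunP E; apply/ffunP => x; apply: inj; have := E x; by rewrite !ffunE.
rewrite -(card_imset _ injF); apply: subset_leq_card; apply/subsetP => _ /imsetP[f Hf ->].
move: Hf; rewrite !inE => /andP[/forallP Hh /subsetP Hk]; apply/andP; split.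
  apply/forallP => a; apply/forallP => b; rewrite !ffunE.
  by have /forallP/(_ b)/eqP -> := Hh a; rewrite hom.
apply/subsetP => p /Hk; rewrite !inE !ffunE => /eqP ->. by [].
Qed.

Lemma Seq_le (A B : finRack) (phi : A -> B) K :
  injective phi -> (forall a b, phi (rop a b) = rop (phi a) (phi b)) ->
  #|Seq A K| <= #|Seq B K|.
Proof.
move=> inj hom.
pose F := fun f : {ffun X -> A} => [ffun x => phi (f x)].
have injF : injective F.
  move=> f g /ffunP E; apply/ffunP => x; apply: inj; have := E x; by rewrite !ffunE.
rewrite -(card_imset _ injF); apply: subset_leq_card; apply/subsetP => _ /imsetP[f Hf ->].
move: Hf; rewrite !inE => /andP[/forallP Hh /eqP Hk]; apply/andP; split.
  apply/forallP => a; apply/forallP => b; rewrite !ffunE.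
  by have /forallP/(_ b)/eqP -> := Hh a; rewrite hom.
rewrite -Hk; apply/eqP/setP => p; rewrite !inE !ffunE.
by rewrite (inj_eq inj).
Qed.

Lemma Sge_prod (A C : finRack) K :
  #|Sge (prod_rack A C) K| = #|Sge A K| * #|Sge C K|.
Proof.
pose F := fun f : {ffun X -> prod_rack A C} =>
  ([ffun x => (f x).1] : {ffun X -> A}, [ffun x => (f x).2] : {ffun X -> C}).
have injF : injective F.
  move=> f g [/ffunP E1 /ffunP E2]; apply/ffunP => x.
  have := E1 x; have := E2 x; rewrite !ffunE.
  by case: (f x) => ? ?; case: (g x) => ? ? /= -> ->.
rewrite -cardsX -(card_imset _ injF); apply: eq_card => -[g h].
apply/imsetP/idP.
  move=> [f Hf [-> ->]]; move: Hf; rewrite !inE => /andP[/forallP Hh /subsetP Hk].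
  apply/andP; split; apply/andP; split.
  - apply/forallP => a; apply/forallP => b; rewrite !ffunE.
    by have /forallP/(_ b)/eqP -> := Hh a.
  - apply/subsetP => p /Hk; rewrite !inE !ffunE => /eqP ->. by [].
  - apply/forallP => a; apply/forallP => b; rewrite !ffunE.
    by have /forallP/(_ b)/eqP -> := Hh a.
  - apply/subsetP => p /Hk; rewrite !inE !ffunE => /eqP ->. by [].
rewrite !inE => /andP[/andP[/forallP Hg /subsetP Kg] /andP[/forallP Hh /subsetP Kh]].
exists ([ffun x => (g x, h x)] : {ffun X -> prod_rack A C}).
  rewrite inE; apply/andP; split.
    apply/forallP => a; apply/forallP => b; rewrite !ffunE.
    have /forallP/(_ b)/eqP -> := Hg a.
    by have /forallP/(_ b)/eqP -> := Hh a.
  apply/subsetP => p Hp; rewrite inE !ffunE.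
  have := Kg p Hp; have := Kh p Hp; rewrite !inE => /eqP -> /eqP ->. by [].
by congr pair; apply/ffunP => x; rewrite !ffunE.
Qed.

Lemma Sge_pos (C : finRack) (t : C) K : rop t t = t -> 0 < #|Sge C K|.
Proof.
move=> tt; apply/card_gt0P; exists [ffun=> t]; rewrite inE; apply/andP; split.
  by apply/forallP => a; apply/forallP => b; rewrite !ffunE tt.
by apply/subsetP => p _; rewrite inE !ffunE.
Qed.

Lemma Seq_eq (A B : finRack) :
  (forall K, #|Sge A K| = #|Sge B K|) -> forall K, #|Seq A K| = #|Seq B K|.
Proof.
move=> H K.
have [m] := ubnP #|~: K|; elim: m K => [|m IH] K //.
rewrite ltnS => Hm.
have := H K; rewrite !Sge_sum [in LHS](bigD1 K) ?subxx //= [in RHS](bigD1 K) ?subxx //=.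
rewrite (eq_bigr (fun K' => #|Seq B K'|)); first by move/eqP; rewrite eqn_add2r => /eqP.
move=> K' /andP[HK HK']; apply: IH; apply: leq_trans Hm.
by apply: proper_card; rewrite properC properEneq eq_sym HK' HK.
Qed.

End Count.

Theorem theorem7p1 (R S T : finRack) :
  connected_rack R -> connected_rack S ->
  (exists t : T, rop t t = t) ->
  rack_isomorphic (prod_rack R T) (prod_rack S T) ->
  rack_isomorphic R S.
Proof.
move=> _ _ [t tt] [f [[g fK gK] fhom]].
have ghom : forall a b, g (rop a b) = rop (g a) (g b).
  by move=> a b; rewrite -{1}(gK a) -{1}(gK b) -fhom fK.
have Hge : forall K, #|@Sge R R K| = #|@Sge R S K|.
  move=> K; apply/eqP; rewrite -(eqn_pmul2r (Sge_pos K tt)) -!Sge_prod eqn_leq.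
  rewrite (Sge_le K (can_inj fK) fhom) /=.
  exact: (Sge_le K (can_inj gK) ghom).
have Heq := Seq_eq Hge.
pose D : {set R * R} := [set p | p.1 == p.2].
have : 0 < #|@Seq R S D|.
  rewrite -Heq; apply/card_gt0P; exists [ffun x => x]; rewrite inE; apply/andP; split.
    by apply/forallP => a; apply/forallP => b; rewrite !ffunE.
  by apply/eqP/setP => p; rewrite !inE !ffunE.
case/card_gt0P => h; rewrite inE => /andP[/forallP Hh /eqP Hk].
have injh : injective h.
  move=> x y E; have : (x, y) \in kerf h by rewrite inE E.
  by rewrite Hk inE => /eqP.
exists h; split.
  apply: (@inj_card_bij _ _ h injh); apply: eq_leq.
  have := bij_eq_card (Bijective fK gK); rewrite !card_prod => /eqP.
  rewrite eqn_pmul2r; first by move/eqP.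
  by apply/card_gt0P; exists t.
by move=> a b; have /forallP/(_ b)/eqP := Hh a.
Qed.
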